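(* Let $f_\theta$ be a neural network parameterized by $\theta$, with $\theta_l$ the parameters of its $l$-th layer, and let $\mathrm{DB\text{-}MLP}^l$ be its $l$-th doubly biased MLP block with input $X^{l-1}$ and zeroth bias $D^l$. Then for any sample $(x,y)$, \[ \|\nabla_{\theta_l}\mathcal{L}_{\mathrm{CE}}(\theta,(x,y))\|_2^2\ \ge\ \|\nabla_{X^{l-1}}\mathcal{L}_{\mathrm{CE}}(\theta,(x,y))\|_2^2+\|H^l(X^{l-1}+D^l)^\top\|_2^2+\|G_V^l(A^l)^\top\|_2^2 . \] If the block is not doubly biased, the first term on the right-hand side disappears.
   Context: $\mathcal{L}_{\mathrm{CE}}(\theta,(x,y))=-\log f(y\mid\theta,x)$ is the Cross-Entropy loss. The DB-MLP block receives $X^{l-1}\in\mathbb{R}^{d\times k}$ (tokens as columns), has zeroth bias $D^l\in\mathbb{R}^{d\times k}$, key matrix $K^l\in\mathbb{R}^{n\times d}$, key bias $b_K^l$, value matrix $V^l\in\mathbb{R}^{d\times n}$, value bias $b_V^l$, computes $A^l=\sigma(K^l(X^{l-1}+D^l)+b_K^l\mathbf1^\top)$ and $Z^l=V^lA^l+b_V^l\mathbf1^\top$ (entrywise activation $\sigma$), and $X^{l-1}$ is used only through $X^{l-1}+D^l$ (the block's first operation). The parameters $\theta_l$ include at least $K^l,V^l,D^l$. $\Gamma^l=\sigma'(K^l(X^{l-1}+D^l)+b_K^l\mathbf1^\top)$ entrywise, $G_K^l=\partial\mathcal{L}_{\mathrm{CE}}/\partial A^l$, $G_V^l=\partial\mathcal{L}_{\mathrm{CE}}/\partial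 Z^l$, $H^l=G_K^l\odot\Gamma^l$ (Hadamard product). Matrix norms are Frobenius norms. *)

(* Defs.v *)
From HB Require Import structures.
From mathcomp Require Import all_boot all_order all_algebra.
From mathcomp Require Import all_classical all_reals all_analysis.
Set Implicit Arguments. Unset Strict Implicit. Unset Printing Implicit Defensive.
Import Order.TTheory GRing.Theory Num.Theory.
Import numFieldNormedType.Exports.
Local Open Scope ring_scope.

Section DBMLP.
Variable R : realType.

Definition frob2 m n (M : 'M[R]_(m, n)) : R := \sum_i \sum_j (M i j) ^+ 2.

Definition mgrad m n (F : 'M[R]_(m, n) -> R) (P : 'M[R]_(m, n)) : 'M[R]_(m, n) :=
  \matrix_(i, j) derive1 (fun t : R => F (P + t *: delta_mx i j)) 0.

Definition hadamard m n (A B : 'M[R]_(m, n)) : 'M[R]_(m, n) := map2_mx *%R A B.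

Definition ones k : 'rV[R]_k := const_mx 1.

Variables (d k n p : nat).

Definition db_pre (K : 'M[R]_(n, d)) (bK : 'cV[R]_n) (X D : 'M[R]_(d, k)) : 'M[R]_(n, k) :=
  K *m (X + D) + bK *m ones k.
Definition db_act (sigma : R -> R) K bK (X D : 'M[R]_(d, k)) : 'M[R]_(n, k) :=
  map_mx sigma (db_pre K bK X D).
Definition db_outA (V : 'M[R]_(d, n)) (bV : 'cV[R]_d) (A : 'M[R]_(n, k)) : 'M[R]_(d, k) :=
  V *m A + bV *m ones k.
Definition db_out sigma K bK V bV (X D : 'M[R]_(d, k)) : 'M[R]_(d, k) :=
  db_outA V bV (db_act sigma K bK X D).

(* The rest of the network (residual branch using X+D, later layers, softmax,
   the remaining layer parameters rho) is an arbitrary function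
   f : (X+D, Z, rho) |-> f(y | theta, x) > 0.  Cross-entropy loss: *)
Definition CEloss (f : ('M[R]_(d, k) * 'M[R]_(d, k)) * 'rV[R]_p -> R)
  sigma X D K bK V bV (rho : 'rV[R]_p) : R :=
  - ln (f ((X + D, db_out sigma K bK V bV X D), rho)).

End DBMLP.

(* Main.v *)
Set Warnings "-notation-overridden,-ambiguous-paths,-notation-incompatible-prefix,-deprecated".
Require Import Defs.
From HB Require Import structures.
From mathcomp Require Import all_boot all_order all_algebra.
From mathcomp Require Import all_classical all_reals all_analysis.
From mathcomp Require Import lra.
Import Order.TTheory GRing.Theory Num.Theory.
Import numFieldNormedType.Exports.
Local Open Scope ring_scope.

Section H.
Variable R : realType.

Lemma derive1_dir (V W : normedModType R) (g : V -> W) (P M : V) :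
  differentiable g P -> derive1 (fun t : R => g (P + t *: M)) 0 = 'd g P M.
Proof.
move=> dg; rewrite -deriveE //.
rewrite /derive1 /derive.
suff -> : (fun h : R => h^-1 *: (g (P + (h + 0) *: M) - g (P + 0 *: M))) =
  (fun h => h^-1 *: (g (h *: M + P) - g P)) by [].
by apply: funext => h; rewrite addr0 scale0r addr0 [P + _]addrC.
Qed.

Lemma lin_expand m n (l : {linear 'M[R]_(m, n) -> R}) (M : 'M[R]_(m, n)) :
  l M = \sum_i \sum_j M i j * l (delta_mx i j).
Proof.
rewrite {1}(matrix_sum_delta M) linear_sum; apply: eq_bigr => i _.
rewrite linear_sum; apply: eq_bigr => j _.
by rewrite linearZ.
Qed.

Lemma GL m n (g : 'M[R]_(m, n) -> R) (c : R -> 'M[R]_(m, n)) :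
  differentiable g (c 0) -> (forall i j, derivable (fun t => c t i j) 0 1) ->
  derive1 (fun t => g (c t)) 0 =
  'd g (c 0) (\matrix_(i, j) derive1 (fun t => c t i j) 0).
Proof.
move=> dg dc.
have dc' : derivable c 0 1 by apply/derivable_mxP.
have Dc : differentiable c 0 by apply/derivable1_diffP.
rewrite (@derive1E' _ _ (g \o c)); last exact: differentiable_comp.
rewrite diff_comp //= -(@deriveE _ _ _ c 0 1 Dc) derive_mx //.
congr ('d g (c 0) _); apply/matrixP => i j; rewrite !mxE.
by rewrite derive1E.
Qed.

Lemma is_derive_lincomb n (w : 'I_n -> R) (s : 'I_n -> R -> R) (ds : 'I_n -> R) (c : R) :
  (forall l, is_derive (0:R) 1 (s l) (ds l)) ->
  is_derive (0:R) 1 (fun t => \sum_l w l * s l t + c) (\sum_l w l * ds l).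
Proof.
move=> hs.
have H : is_derive (0:R) 1 (\sum_l (w l \*: s l) + cst c) (\sum_l w l *: ds l + 0).
  apply: is_deriveD.
have -> : (fun t => \sum_l w l * s l t + c) = \sum_l (w l \*: s l) + cst c.
  apply: funext => t /=; rewrite fct_sumE /=; congr (_ + _).
by rewrite addr0 in H.
Qed.

Lemma is_derive_sig (sigma : R -> R) (a b : R) : derivable sigma a 1 ->
  is_derive (0:R) 1 (fun t => sigma (a + t * b)) (derive1 sigma a * b).
Proof.
move=> ds.
have hf : is_derive (0:R) 1 (fun t : R => a + t * b) b.
  have -> : (fun t : R => a + t * b) = cst a + id * cst b by apply: funext.
  have h1 := is_deriveD (@is_derive_cst R R R a 0 1)
     (is_deriveM (@is_derive_id R R 0 1) (@is_derive_cst R R R b 0 1)).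
  apply: is_derive_eq h1 _.
  by rewrite /= scale0r add0r add0r /GRing.scale /= mulr1.
have hf' : derivable (fun t : R => a + t * b) 0 1 by case: hf.
have ds' : derivable sigma ((fun t : R => a + t * b) 0) 1 by rewrite /= mul0r addr0.
have dc : derivable (sigma \o (fun t : R => a + t * b)) 0 1.
  apply/derivable1_diffP; apply: differentiable_comp.
    exact/derivable1_diffP.
  exact/derivable1_diffP.
have := derive1_comp hf' ds'.
rewrite /= mul0r addr0 => E.
apply: DeriveDef => //.
by rewrite -derive1E E !derive1E (@derive_val _ _ _ _ _ _ _ hf).
Qed.

Lemma delta_mul (a0 b0 c0 : nat) (i : 'I_a0) (j : 'I_b0) (A : 'M[R]_(b0, c0)) a b :
  (delta_mx i j *m A) a b = (a == i)%:R * A j b.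
Proof.
rewrite !mxE (bigD1 j) //= bigop.big1; last first.
  by move=> l nl; rewrite mxE (negbTE nl) andbF mul0r.
by rewrite mxE eqxx andbT addr0.
Qed.

Lemma collapse (a0 b0 : nat) (i : 'I_a0) (F : 'I_a0 -> 'I_b0 -> R) :
  \sum_a \sum_b ((a == i)%:R * F a b) = \sum_b F i b.
Proof.
rewrite (bigD1 i) //= [X in _ + X]bigop.big1; last first.
  move=> a na; rewrite (negbTE na); under eq_bigr do rewrite mul0r; by rewrite big1_eq.
by rewrite addr0; apply: eq_bigr => b _; rewrite eqxx mul1r.
Qed.

Lemma frob2_ge0 m n (M : 'M[R]_(m, n)) : 0 <= frob2 M.
Proof. by apply: sumr_ge0 => i _; apply: sumr_ge0 => j _; apply: sqr_ge0. Qed.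

Section Main.
Variables (d k n p : nat)
  (sigma : R -> R) (f : ('M[R]_(d, k) * 'M[R]_(d, k)) * 'rV[R]_p -> R)
  (hsigma : forall t : R, derivable sigma t 1)
  (hfdiff : forall q, differentiable f q)
  (hfpos : forall q, 0 < f q)
  (X : 'M[R]_(d, k)) (K : 'M[R]_(n, d)) (bK : 'cV[R]_n)
  (V : 'M[R]_(d, n)) (bV : 'cV[R]_d) (rho : 'rV[R]_p) (D : 'M[R]_(d, k)).

Local Notation g := (fun Z => - ln (f ((X + D, Z), rho))).

Lemma dg Z : differentiable g Z.
Proof.
have dp : differentiable (fun Z : 'M[R]_(d, k) => ((X + D, Z), rho)) Z.
  apply: differentiable_pair; last exact: differentiable_cst.
  apply: differentiable_pair; first exact: differentiable_cst.
  exact: ex_diff.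
have dfp : differentiable (f \o (fun Z : 'M[R]_(d, k) => ((X + D, Z), rho))) Z.
  exact: differentiable_comp.
have dl : differentiable ((@ln R) \o (f \o (fun Z : 'M[R]_(d, k) => ((X + D, Z), rho)))) Z.
  apply: differentiable_comp => //.
  apply/derivable1_diffP; have := is_derive1_ln (hfpos ((X + D, Z), rho)). case=> //.
exact: differentiableN dl.
Qed.

Lemma gradV_eq :
  mgrad (fun V' => CEloss f sigma X D K bK V' bV rho) V =
  mgrad g (db_out sigma K bK V bV X D) *m (db_act sigma K bK X D)^T.
Proof.
apply/matrixP => i j; rewrite !mxE.
set A := db_act sigma K bK X D.
set Z0 := db_out sigma K bK V bV X D.
have -> : (fun t : R => CEloss f sigma X D K bK (V + t *: delta_mx i j) bV rho) =
    (fun t => g (Z0 + t *: (delta_mx i j *m A))).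
  apply: funext => t; rewrite /CEloss /g /Z0 /db_out /db_outA.
  by rewrite mulmxDl scalemxAl addrAC.
rewrite (@derive1_dir _ _ g); last exact: dg.
rewrite lin_expand.
under eq_bigr do under eq_bigr do rewrite delta_mul -mulrA.
rewrite collapse; apply: eq_bigr => b _.
rewrite !mxE (@derive1_dir _ _ g); last exact: dg.
by rewrite mulrC.
Qed.

Lemma gradK_eq :
  mgrad (fun K' => CEloss f sigma X D K' bK V bV rho) K =
  hadamard (mgrad (fun A' => - ln (f ((X + D, db_outA V bV A'), rho))) (db_act sigma K bK X D))
    (map_mx (derive1 sigma) (db_pre K bK X D)) *m (X + D)^T.
Proof.
apply/matrixP => i j; rewrite !mxE.
set Pm := db_pre K bK X D.
set N := delta_mx i j *m (X + D).
have -> : (fun t : R => CEloss f sigma X D (K + t *: delta_mx i j) bK V bV rho) =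
    (fun t => g (db_outA V bV (map_mx sigma (Pm + t *: N)))).
  apply: funext => t; rewrite /CEloss /db_out /db_act /Pm /N /db_pre.
  by rewrite mulmxDl scalemxAl addrAC.
have ent : forall a b, is_derive (0:R) 1
    (fun t => db_outA V bV (map_mx sigma (Pm + t *: N)) a b)
    (\sum_l V a l * (derive1 sigma (Pm l b) * N l b)).
  move=> a b.
  have -> : (fun t => db_outA V bV (map_mx sigma (Pm + t *: N)) a b) =
      (fun t => \sum_l V a l * sigma (Pm l b + t * N l b) + (bV *m @ones R k) a b).
    apply: funext => t; rewrite /db_outA !mxE; congr (_ + _).
    by apply: eq_bigr => l _; rewrite !mxE.
  apply: is_derive_lincomb => l; apply: is_derive_sig; exact: hsigma.
rewrite (@GL _ _ g (fun t => db_outA V bV (map_mx sigma (Pm + t *: N)))); last 2 first.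
- exact: dg.
- by move=> a b; case: (ent a b).
set Ad := \matrix_(a, b) (derive1 sigma (Pm a b) * N a b).
have -> : \matrix_(a, b) derive1 (fun t => db_outA V bV (map_mx sigma (Pm + t *: N)) a b) 0
    = V *m Ad.
  apply/matrixP => a b; rewrite !mxE derive1E (@derive_val _ _ _ _ _ _ _ (ent a b)).
  by apply: eq_bigr => l _; rewrite /Ad [in RHS]mxE.
rewrite /= scale0r addr0.
have -> : V *m Ad = \sum_a \sum_b Ad a b *: (V *m delta_mx a b).
  rewrite {1}(matrix_sum_delta Ad) mulmx_sumr; apply: eq_bigr => a _.
  by rewrite mulmx_sumr; apply: eq_bigr => b _; rewrite scalemxAr.
rewrite linear_sum.
set Lg := 'd g _.
have -> : \sum_a Lg (\sum_b Ad a b *: (V *m delta_mx a b)) =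
    \sum_a \sum_b ((a == i)%:R * (derive1 sigma (Pm a b) * (X + D) j b * Lg (V *m delta_mx a b))).
  apply: eq_bigr => a _; rewrite linear_sum; apply: eq_bigr => b _.
  rewrite linearZ /= /Ad mxE /N delta_mul.
  have E : forall x y : R, x *: y = x * y by [].
  by rewrite E mulrCA !mulrA.
rewrite collapse; apply: eq_bigr => b _; rewrite /hadamard !mxE.
have -> : (fun t : R => - ln (f (X + D, db_outA V bV (db_act sigma K bK X D + t *: delta_mx i b), rho)))
   = (fun t => g (db_outA V bV (map_mx sigma Pm) + t *: (V *m delta_mx i b))).
  apply: funext => t; rewrite /db_outA /db_act -/Pm.
  by rewrite mulmxDr scalemxAr addrAC.
rewrite (@derive1_dir _ _ g); last exact: dg.
by rewrite /Lg [LHS]mulrC mulrA.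
Qed.


Lemma gradD_eq :
  mgrad (fun D' => CEloss f sigma X D' K bK V bV rho) D =
  mgrad (fun X' => CEloss f sigma X' D K bK V bV rho) X.
Proof.
apply/matrixP => i j; rewrite !mxE.
have -> : (fun t : R => CEloss f sigma X (D + t *: delta_mx i j) K bK V bV rho) =
   (fun t : R => CEloss f sigma (X + t *: delta_mx i j) D K bK V bV rho).
  by apply: funext => t; rewrite /CEloss /db_out /db_act /db_pre addrA addrAC.
by [].
Qed.

End Main.
End H.

Lemma ineq1 (R : realType) (a b c d e f : R) : 0 <= b -> 0 <= d -> 0 <= f ->
  e + a + c <= a + b + c + d + e + f.
Proof. move=> *; lra. Qed.

Lemma ineq2 (R : realType) (a b c d f : R) : 0 <= b -> 0 <= d -> 0 <= f ->
  a + c <= a + b + c + d + f.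
Proof. move=> *; lra. Qed.

Theorem mainTheorem8 (R : realType) (d k n p : nat)
  (sigma : R -> R) (f : ('M[R]_(d, k) * 'M[R]_(d, k)) * 'rV[R]_p -> R)
  (hsigma : forall t : R, derivable sigma t 1)
  (hfdiff : forall q, differentiable f q)
  (hfpos : forall q, 0 < f q)
  (X : 'M[R]_(d, k)) (K : 'M[R]_(n, d)) (bK : 'cV[R]_n)
  (V : 'M[R]_(d, n)) (bV : 'cV[R]_d) (rho : 'rV[R]_p) :
  (* doubly biased block, zeroth bias D is a parameter *)
  (forall D : 'M[R]_(d, k),
    let L := CEloss f sigma in
    let A := db_act sigma K bK X D in
    let G_V := mgrad (fun Z => - ln (f ((X + D, Z), rho))) (db_out sigma K bK V bV X D) in
    let G_K := mgrad (fun A' => - ln (f ((X + D, db_outA V bV A'), rho))) A in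
    let Gamma := map_mx (derive1 sigma) (db_pre K bK X D) in
    let H := hadamard G_K Gamma in
    frob2 (mgrad (fun K' => L X D K' bK V bV rho) K)
    + frob2 (mgrad (fun bK' => L X D K bK' V bV rho) bK)
    + frob2 (mgrad (fun V' => L X D K bK V' bV rho) V)
    + frob2 (mgrad (fun bV' => L X D K bK V bV' rho) bV)
    + frob2 (mgrad (fun D' => L X D' K bK V bV rho) D)
    + frob2 (mgrad (fun rho' => L X D K bK V bV rho') rho)
    >= frob2 (mgrad (fun X' => L X' D K bK V bV rho) X)
       + frob2 (H *m (X + D)^T) + frob2 (G_V *m A^T))
  /\
  (* block not doubly biased: no zeroth bias (D = 0, not a parameter) *)
  (let L := CEloss f sigma in
   let D := (0 : 'M[R]_(d, k)) in
   let A := db_act sigma K bK X D in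
   let G_V := mgrad (fun Z => - ln (f ((X + D, Z), rho))) (db_out sigma K bK V bV X D) in
   let G_K := mgrad (fun A' => - ln (f ((X + D, db_outA V bV A'), rho))) A in
   let Gamma := map_mx (derive1 sigma) (db_pre K bK X D) in
   let H := hadamard G_K Gamma in
   frob2 (mgrad (fun K' => L X D K' bK V bV rho) K)
   + frob2 (mgrad (fun bK' => L X D K bK' V bV rho) bK)
   + frob2 (mgrad (fun V' => L X D K bK V' bV rho) V)
   + frob2 (mgrad (fun bV' => L X D K bK V bV' rho) bV)
   + frob2 (mgrad (fun rho' => L X D K bK V bV rho') rho)
   >= frob2 (H *m (X + D)^T) + frob2 (G_V *m A^T)).
Proof.
split.
- move=> D; cbv zeta.
  rewrite gradK_eq // gradV_eq // gradD_eq.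
  by apply: ineq1; apply: frob2_ge0.
- cbv zeta.
  rewrite gradK_eq // gradV_eq //.
  by apply: ineq2; apply: frob2_ge0.
Qed.
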